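(* There exist non-symmetric operads of sets $P$ and $P'$ such that $P$ and $P'$ are not isomorphic as operads, but the monads on $\mathbf{Set}$ induced by $P$ and by $P'$ are isomorphic (as monads).
   Context: A non-symmetric operad of sets $P$ consists of sets $P(n)$ for $n\in\mathbb{N}$, an identity element $1\in P(1)$, and composition maps $P(n)\times P(k_1)\times\cdots\times P(k_n)\to P(k_1+\cdots+k_n)$, $(\theta,\theta_1,\dots,\theta_n)\mapsto \theta\circ(\theta_1,\dots,\theta_n)$, satisfying the usual associativity and unit axioms. A map of operads $f:P\to P'$ is a family of functions $f_n:P(n)\to P'(n)$ preserving identity and composition. The monad $(S,\mu,\eta)$ on $\mathbf{Set}$ induced by $P$ is given by $SX=\sum_{n\in\mathbb{N}}P(n)\times X^n$; $\eta_X:X\to SX$ sends $x$ to $(1,x)$; and $\mu_X:S^2X\to SX$ sends $(\theta,(\theta_1,x_1^1,\dots,x_1^{k_1}),\dots,(\theta_n,x_n^1,\dots,x_n^{k_n}))$ to $(\theta\circ(\theta_1,\dots,\theta_n),x_1^1,\dots,x_1^{k_1},\dots,x_n^1,\dots,x_n^{k_n})$. An isomorphism of monads $(S,\mu,\eta)\to(S',\mu',\eta')$ is a natural isomorphism $\iota:S\to S'$ with $\iota\eta=\eta'$ and $\iota_X\circ\mu_X=\mu'_X\circ\iota_{S'X}\circ S\iota_X$ for all sets $X$. *)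

(* Defs.v *)
From mathcomp Require Import all_boot.
Set Implicit Arguments.
Unset Strict Implicit.
Unset Printing Implicit Defensive.

(* Canonical (lexicographic) bijection 'I_(k_0+...+k_{n-1}) -> {i & 'I_(k i)}:
   the m-th element of the list (0,0),...,(0,k_0-1),(1,0),...  *)
Definition sum_list n (k : 'I_n -> nat) : seq {i : 'I_n & 'I_(k i)} :=
  flatten [seq [seq existT (fun i => 'I_(k i)) i j | j <- enum 'I_(k i)]
          | i <- enum 'I_n].

Lemma size_sum_list n (k : 'I_n -> nat) : size (sum_list k) == \sum_(i < n) k i.
Proof.
rewrite /sum_list size_flatten /shape -map_comp sumnE big_map big_enum /=.
by apply/eqP; apply: eq_bigr => i _; rewrite /= size_map size_enum_ord.
Qed.

Definition sum_split n (k : 'I_n -> nat) (m : 'I_(\sum_(i < n) k i)) :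
  {i : 'I_n & 'I_(k i)} := tnth (Tuple (size_sum_list k)) m.

(* Equations between elements of possibly different (but provably equal)
   arities are stated in the total type {n & op n}. *)
Record operad := Operad {
  op :> nat -> Type;
  op_id : op 1;
  op_comp : forall n, op n -> forall (k : 'I_n -> nat),
      (forall i, op (k i)) -> op (\sum_(i < n) k i);
  op_idl : forall k (y : op k),
      existT op _ (@op_comp 1%N op_id (fun _ => k) (fun _ => y)) = existT op k y;
  op_idr : forall n (x : op n),
      existT op _ (@op_comp n x (fun _ => 1%N) (fun _ => op_id)) = existT op n x;
  op_assoc : forall n (x : op n) (k : 'I_n -> nat) (y : forall i, op (k i))
      (l : forall i, 'I_(k i) -> nat) (z : forall i j, op (l i j)),
      existT op _ (@op_comp n x (fun i => \sum_(j < k i) l i j)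
                             (fun i => @op_comp (k i) (y i) (l i) (z i)))
      = existT op _ (@op_comp _ (@op_comp n x k y)
                       (fun m => l (tag (@sum_split n k m)) (tagged (@sum_split n k m)))
                       (fun m => z (tag (@sum_split n k m)) (tagged (@sum_split n k m))))
}.

Arguments op_id {o}.
Arguments op_comp {o n}.

Definition is_operad_map (P Q : operad) (f : forall n, P n -> Q n) : Prop :=
  f 1%N op_id = op_id /\
  forall n (x : P n) (k : 'I_n -> nat) (y : forall i, P (k i)),
    f _ (op_comp x k y) = op_comp (f n x) k (fun i => f _ (y i)).

Definition operad_iso (P Q : operad) : Prop :=
  exists (f : forall n, P n -> Q n) (g : forall n, Q n -> P n),
    is_operad_map f /\ is_operad_map g /\
    (forall n x, g n (f n x) = x) /\ (forall n x, f n (g n x) = x).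

Definition S (P : operad) (X : Type) : Type :=
  {n : nat & (P n * ('I_n -> X))%type}.

Definition Smap (P : operad) X Y (h : X -> Y) (s : S P X) : S P Y :=
  existT _ (tag s) ((tagged s).1, fun i => h ((tagged s).2 i)).

Definition eta (P : operad) X (x : X) : S P X :=
  existT _ 1%N (op_id, fun _ => x).

Definition mu (P : operad) X (s : S P (S P X)) : S P X :=
  let n := tag s in
  let th := (tagged s).1 in
  let f := (tagged s).2 in
  existT _ (\sum_(i < n) tag (f i))
    (op_comp th (fun i => tag (f i)) (fun i => (tagged (f i)).1),
     fun m => (tagged (f (tag (@sum_split n (fun i => tag (f i)) m)))).2
                (tagged (@sum_split n (fun i => tag (f i)) m))).

Definition monad_iso (P Q : operad) : Prop :=
  exists (iota : forall X, S P X -> S Q X) (jota : forall X, S Q X -> S P X),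
    (forall X Y (h : X -> Y) (s : S P X), iota Y (Smap h s) = Smap h (iota X s)) /\
    (forall X (s : S P X), jota X (iota X s) = s) /\
    (forall X (s : S Q X), iota X (jota X s) = s) /\
    (forall X (x : X), iota X (eta P x) = eta Q x) /\
    (forall X (s : S P (S P X)),
        iota X (mu s) = mu (iota (S Q X) (Smap (iota X) s))).

(* Main.v *)
Require Import Defs.
From mathcomp Require Import all_boot zify.
From Stdlib Require Import FunctionalExtensionality.
Set Implicit Arguments.
Unset Strict Implicit.
Unset Printing Implicit Defensive.

Definition shp n (k : 'I_n -> nat) : seq nat := map k (enum 'I_n).

Lemma sumn_shp n (k : 'I_n -> nat) : sumn (shp k) = \sum_(i < n) k i.
Proof. by rewrite /shp sumnE big_map big_enum. Qed.

Lemma size_shp n (k : 'I_n -> nat) : size (shp k) = n.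
Proof. by rewrite /shp size_map size_enum_ord. Qed.

Lemma shape_sum_list n (k : 'I_n -> nat) :
  shape [seq [seq existT (fun i => 'I_(k i)) i j | j <- enum 'I_(k i)] | i <- enum 'I_n]
  = shp k.
Proof.
rewrite /shape /shp -map_comp; apply: eq_map => i /=.
by rewrite size_map size_enum_ord.
Qed.

Lemma ss_val n (k : 'I_n -> nat) (m : 'I_(\sum_(i < n) k i)) :
  val (tag (@sum_split n k m)) = reshape_index (shp k) m /\
  val (tagged (@sum_split n k m)) = reshape_offset (shp k) m.
Proof.
have x0 := @sum_split n k m.
have -> : @sum_split n k m = nth x0 (sum_list k) m by rewrite /sum_split (tnth_nth x0).
have hm : m < sumn (shp k) by rewrite sumn_shp.
have hr := reshape_indexP hm.
have hc := reshape_offsetP hm.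
rewrite /sum_list nth_flatten shape_sum_list.
rewrite size_shp in hr.
set r := reshape_index (shp k) m in hr hc *.
set c := reshape_offset (shp k) m in hc *.
have i0 : 'I_n := Ordinal hr.
rewrite (nth_map i0) ?size_enum_ord //.
rewrite /shp (nth_map i0) ?size_enum_ord // in hc.
set i := nth i0 (enum 'I_n) r in hc *.
have j0 : 'I_(k i) := Ordinal hc.
rewrite (nth_map j0) ?size_enum_ord //=.
by rewrite !nth_enum_ord.
Qed.

Lemma ss_fi n (k : 'I_n -> nat) (m : 'I_(\sum_(i < n) k i)) :
  flatten_index (shp k) (tag (@sum_split n k m)) (tagged (@sum_split n k m)) = m.
Proof. by case: (ss_val m) => -> ->; rewrite reshape_indexK. Qed.

Lemma ss_char n (k : 'I_n -> nat) (m : 'I_(\sum_(i < n) k i)) (i : 'I_n) (j : 'I_(k i)) :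
  flatten_index (shp k) i j = m ->
  val (tag (@sum_split n k m)) = i /\ val (tagged (@sum_split n k m)) = j.
Proof.
move=> E; case: (ss_val m) => -> ->; rewrite -E.
have hj : j < nth 0 (shp k) i by rewrite /shp (nth_map i) ?size_enum_ord // nth_ord_enum.
by rewrite flatten_indexKl // flatten_indexKr.
Qed.

Definition T (n : nat) : Type := {b : bool | 0 < n}.
Definition tv n (x : T n) : bool := proj1_sig x.
Definition tp n (x : T n) : 0 < n := proj2_sig x.

Lemma Teq n (x y : T n) : tv x = tv y -> x = y.
Proof.
case: x => a pa; case: y => b pb /= E; subst b.
by rewrite (bool_irrelevance pa pb).
Qed.

Lemma existT_T m m' (x : T m) (x' : T m') : m = m' -> tv x = tv x' ->
  existT T m x = existT T m' x'.
Proof. by move=> E; subst m'; move/Teq => ->. Qed.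

Lemma sum_pos n (k : 'I_n -> nat) (i : 'I_n) : 0 < k i -> 0 < \sum_(i < n) k i.
Proof. by move=> h; rewrite (bigD1 i) //= ltn_addr. Qed.

Lemma last_lt n : 0 < n -> n.-1 < n.
Proof. by case: n. Qed.

Definition Tid : T 1 := exist _ false (erefl true).

Definition compP n (x : T n) (k : 'I_n -> nat) (y : forall i, T (k i)) : T (\sum_(i < n) k i) :=
  let i0 := Ordinal (tp x) in exist _ (xorb (tv x) (tv (y i0))) (sum_pos (tp (y i0))).

Definition compQ n (x : T n) (k : 'I_n -> nat) (y : forall i, T (k i)) : T (\sum_(i < n) k i) :=
  let i0 := Ordinal (last_lt (tp x)) in exist _ (xorb (tv x) (tv (y i0))) (sum_pos (tp (y i0))).

Lemma sum_const1 n : \sum_(i < n) 1 = n.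
Proof. by rewrite sum1_card card_ord. Qed.

Lemma idlP k (y : T k) : existT T _ (@compP 1%N Tid (fun _ => k) (fun _ => y)) = existT T k y.
Proof. by apply: existT_T; rewrite ?big_ord1. Qed.
Lemma idlQ k (y : T k) : existT T _ (@compQ 1%N Tid (fun _ => k) (fun _ => y)) = existT T k y.
Proof. by apply: existT_T; rewrite ?big_ord1. Qed.
Lemma idrP n (x : T n) : existT T _ (@compP n x (fun _ => 1%N) (fun _ => Tid)) = existT T n x.
Proof. by apply: existT_T; [exact: sum_const1|]; case: x => [[]]. Qed.
Lemma idrQ n (x : T n) : existT T _ (@compQ n x (fun _ => 1%N) (fun _ => Tid)) = existT T n x.
Proof. by apply: existT_T; [exact: sum_const1|]; case: x => [[]]. Qed.

Lemma sum_ss n (k : 'I_n -> nat) (F : {i : 'I_n & 'I_(k i)} -> nat) :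
  \sum_(m < \sum_(i < n) k i) F (@sum_split n k m) = \sum_(i < n) \sum_(j < k i) F (existT _ i j).
Proof.
rewrite -big_enum /= -(big_map (@sum_split n k) xpredT F).
rewrite /sum_split map_tnth_enum /= /sum_list big_flatten big_map big_enum /=.
by apply: eq_bigr => i _; rewrite big_map big_enum.
Qed.

Lemma dep_eq n (k : 'I_n -> nat) B (F : forall i, 'I_(k i) -> B) i i' (j : 'I_(k i)) (j' : 'I_(k i')) :
  i = i' -> val j = val j' -> F i j = F i' j'.
Proof. by move=> E; subst i' => /val_inj ->. Qed.

Lemma xorbA a b c : xorb a (xorb b c) = xorb (xorb a b) c.
Proof. by case: a; case: b; case: c. Qed.

Lemma assocP n (x : T n) (k : 'I_n -> nat) (y : forall i, T (k i))
      (l : forall i, 'I_(k i) -> nat) (z : forall i j, T (l i j)) :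
      existT T _ (@compP n x (fun i => \sum_(j < k i) l i j)
                             (fun i => @compP (k i) (y i) (l i) (z i)))
      = existT T _ (@compP _ (@compP n x k y)
                       (fun m => l (tag (@sum_split n k m)) (tagged (@sum_split n k m)))
                       (fun m => z (tag (@sum_split n k m)) (tagged (@sum_split n k m)))).
Proof.
apply: existT_T.
  by rewrite (@sum_ss n k (fun p => l (tag p) (tagged p))).
rewrite /compP /tv /=.
set i0 := Ordinal (tp x).
set j0 := Ordinal (tp (y i0)).
set m0 := Ordinal _.
have [E1 E2] : val (tag (@sum_split n k m0)) = i0 /\ val (tagged (@sum_split n k m0)) = j0.
  by apply: (@ss_char n k m0 i0 j0); rewrite /flatten_index take0.

rewrite xorbA; congr xorb.
have E1' : tag (@sum_split n k m0) = i0 by apply: val_inj.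
exact: (@dep_eq n k _ (fun i j => proj1_sig (z i j)) _ _ _ _ (esym E1') (esym E2)).
Qed.

Lemma fi_last n (k : 'I_n -> nat) (i : 'I_n) (j : 'I_(k i)) :
  val i = n.-1 -> val j = (k i).-1 ->
  flatten_index (shp k) i j = (\sum_(i < n) k i).-1.
Proof.
move=> Ei Ej; rewrite -sumn_shp /flatten_index.
have hi : i < size (shp k) by rewrite size_shp.
have hn : nth 0 (shp k) i = k i by rewrite /shp (nth_map i) ?size_enum_ord // nth_ord_enum.
rewrite -{2}(cat_take_drop i (shp k)) (drop_nth 0 hi) sumn_cat /=.
have -> : drop i.+1 (shp k) = [::] by apply: drop_oversize; rewrite size_shp Ei; lia.
rewrite hn Ej /= addn0.
have := ltn_ord j; lia.
Qed.

Lemma assocQ n (x : T n) (k : 'I_n -> nat) (y : forall i, T (k i))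
      (l : forall i, 'I_(k i) -> nat) (z : forall i j, T (l i j)) :
      existT T _ (@compQ n x (fun i => \sum_(j < k i) l i j)
                             (fun i => @compQ (k i) (y i) (l i) (z i)))
      = existT T _ (@compQ _ (@compQ n x k y)
                       (fun m => l (tag (@sum_split n k m)) (tagged (@sum_split n k m)))
                       (fun m => z (tag (@sum_split n k m)) (tagged (@sum_split n k m)))).
Proof.
apply: existT_T.
  by rewrite (@sum_ss n k (fun p => l (tag p) (tagged p))).
rewrite /compQ /tv /=.
set i0 := Ordinal (last_lt (tp x)).
set j0 := Ordinal (last_lt (tp (y i0))).
set m0 := Ordinal _.
have [E1 E2] : val (tag (@sum_split n k m0)) = i0 /\ val (tagged (@sum_split n k m0)) = j0.
  by apply: (@ss_char n k m0 i0 j0); rewrite fi_last.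
rewrite xorbA; congr xorb.
have E1' : tag (@sum_split n k m0) = i0 by apply: val_inj.
exact: (@dep_eq n k _ (fun i j => proj1_sig (z i j)) _ _ _ _ (esym E1') (esym E2)).
Qed.

Definition OP : operad := @Operad T Tid compP idlP idrP assocP.
Definition OQ : operad := @Operad T Tid compQ idlQ idrQ assocQ.

Lemma not_iso : ~ operad_iso OP OQ.
Proof.
case=> f [g] [_ [[_ gm] [_ fg]]].
pose x : T 2 := exist _ false (erefl true).
pose t : T 1 := exist _ true (erefl true).
pose ys (b : T 1) := fun i : 'I_2 => if val i == 0 then Tid else b.
have E : forall b, @compQ 2 x (fun _ => 1%N) (ys b) =
                   f _ (@compP 2 (g 2 x) (fun _ => 1%N) (fun i => g 1%N (ys b i))).
  by move=> b; rewrite -(fg _ (@compQ 2 x (fun _ => 1%N) (ys b))); congr (f _ _); apply: (gm 2 x).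
have : @compQ 2 x (fun _ => 1%N) (ys Tid) = @compQ 2 x (fun _ => 1%N) (ys t).
  by rewrite !E; congr (f _ _); apply: Teq.
by move/(congr1 (@tv _)).
Qed.

Lemma nth_shp n (k : 'I_n -> nat) (i0 : 'I_n) i : i < n ->
  nth 0 (shp k) i = k (nth i0 (enum 'I_n) i).
Proof. by move=> hi; rewrite /shp (nth_map i0) ?size_enum_ord. Qed.

Lemma shp_rev n (k : 'I_n -> nat) : shp (fun i => k (rev_ord i)) = rev (shp k).
Proof.
apply: (@eq_from_nth _ 0); first by rewrite size_rev !size_shp.
rewrite size_shp => i hi.
have i0 : 'I_n := Ordinal hi.
rewrite nth_rev ?size_shp // (nth_shp _ i0) // (nth_shp _ i0); last lia.
congr k; apply: val_inj => /=; rewrite !nth_enum_ord //; lia.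
Qed.

Lemma split_rev n (k : 'I_n -> nat) (e : \sum_(i < n) k i = \sum_(i < n) k (rev_ord i))
  (m : 'I_(\sum_(i < n) k i)) :
  let s' := @sum_split n (fun i => k (rev_ord i)) (cast_ord e m) in
  val (tag (@sum_split n k (rev_ord m))) = val (rev_ord (tag s')) /\
  val (tagged (@sum_split n k (rev_ord m))) = val (@rev_ord (k (rev_ord (tag s'))) (tagged s')).
Proof.
move=> s'.
apply: (@ss_char n k (rev_ord m) (rev_ord (tag s')) (rev_ord (tagged s'))).
have F := ss_fi (cast_ord e m); rewrite -/s' shp_rev /= in F.
move: F; rewrite /flatten_index /=.
set r := val (tag s'); set c := val (tagged s').
have hr : r < n by exact: ltn_ord.
have hc : c < k (rev_ord (tag s')) by exact: ltn_ord.
have Esum : \sum_(i < n) k i = sumn (shp k) by rewrite sumn_shp.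
have i0 : 'I_n := tag s'.
have ha : n - r.+1 < size (shp k) by rewrite size_shp; lia.
have Ek : nth 0 (shp k) (n - r.+1) = k (rev_ord (tag s')).
  rewrite (nth_shp _ i0); last lia.
  congr k; apply: val_inj => /=; rewrite nth_enum_ord //; lia.
have Etot : sumn (shp k) = sumn (take (n - r.+1) (shp k)) + nth 0 (shp k) (n - r.+1)
                           + sumn (drop (n - r) (shp k)).
  rewrite -{1}(cat_take_drop (n - r.+1) (shp k)) (drop_nth 0 ha) sumn_cat /=.
  have -> : (n - r.+1).+1 = n - r by lia.
  by rewrite addnA.
rewrite take_rev size_shp sumn_rev => Fm.
have hm := ltn_ord m.
move: (nat_of_ord m) hm Fm => M hm Fm.
move: Esum hm; set tot := \sum_(i < n) k i => Esum hm.
move: Etot; rewrite Ek; lia.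
Qed.

Definition iotaPQ X (s : S OP X) : S OQ X :=
  existT _ (tag s) ((tagged s).1, fun i => (tagged s).2 (rev_ord i)).
Definition jotaQP X (s : S OQ X) : S OP X :=
  existT _ (tag s) ((tagged s).1, fun i => (tagged s).2 (rev_ord i)).

Lemma Sext X n n' (e : n = n') (a : T n) (a' : T n') (F : 'I_n -> X) (F' : 'I_n' -> X) :
  tv a = tv a' -> (forall m, F m = F' (cast_ord e m)) ->
  existT (fun n => (T n * ('I_n -> X))%type) n (a, F) = existT _ n' (a', F').
Proof.
move=> Ea EF; subst n'; rewrite (Teq Ea); congr existT; congr pair.
by apply: functional_extensionality => m; rewrite EF cast_ord_id.
Qed.

Lemma mu_ok X (s : S OP (S OP X)) :
  iotaPQ (mu s) = mu (iotaPQ (Smap (@iotaPQ X) s)).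
Proof.
case: s => n [th f].
rewrite /iotaPQ /mu /Smap /=.
pose k := fun i => tag (f i).
have e : \sum_(i < n) k i = \sum_(i < n) k (rev_ord i) by apply: reindex_inj; exact: rev_ord_inj.
refine (@Sext X _ _ e _ _ _ _ _ _).
  rewrite /= /compP /compQ /tv /=.
  congr xorb; congr (proj1_sig (tagged (f _)).1).
  apply: val_inj => /=; have := tp th; lia.
move=> m /=.
have [E1 E2] := split_rev e m.
have E1' := val_inj E1.
exact: (@dep_eq n k _ (fun i j => (tagged (f i)).2 j) _ _ _ _ E1' E2).
Qed.

Lemma monad_ok : monad_iso OP OQ.
Proof.
exists iotaPQ, jotaQP; split; first by [].
split; first by move=> X [n [a F]]; rewrite /jotaQP /iotaPQ /=;
  congr existT; congr pair; apply: functional_extensionality => i; rewrite rev_ordK.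
split; first by move=> X [n [a F]]; rewrite /jotaQP /iotaPQ /=;
  congr existT; congr pair; apply: functional_extensionality => i; rewrite rev_ordK.
split; first by [].
exact: mu_ok.
Qed.

Theorem mainTheorem1 :
  exists P Q : operad, ~ operad_iso P Q /\ monad_iso P Q.
Proof. exists OP, OQ; split; [exact: not_iso | exact: monad_ok]. Qed.
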